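(* An abelian group $A$ is almost divisible if and only if for every sequence $(q_n)_{n\in\mathbb{N}}$ of integers there exists $m\in\mathbb{N}$ such that for every $n>m$ we have $q_{<n}A=q_{<m}A$.
   Context: For a prime $p$, the $p$-length $l_p(A)$ of an abelian group $A$ is the smallest ordinal $\lambda$ such that $p^\lambda A$ is $p$-divisible, where $p^0A=A$, $p^{\alpha+1}A=p(p^\alpha A)$ and $p^\alpha A=\bigcap_{\beta<\alpha}p^\beta A$ for limit $\alpha$. An abelian group $A$ is called almost divisible if $l_p(A)=0$ for all but finitely many primes $p$ and $l_p(A)<\omega$ for every prime $p$. For a sequence $(q_n)_{n\in\mathbb{N}}$ of integers, $q_{<n}:=\prod_{l<n}q_l$ (so $q_{<0}=1$). *)

(* Defs.v *)
From mathcomp Require Import all_boot all_order all_algebra.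
Unset Printing Implicit Defensive.
Import GRing.Theory.
Local Open Scope ring_scope.

Definition seteqP (A : zmodType) (S T : A -> Prop) : Prop :=
  forall x, S x <-> T x.

Definition zmulset (A : zmodType) (q : int) (S : A -> Prop) : A -> Prop :=
  fun y => exists2 x, S x & y = x *~ q.

Definition nmulset (A : zmodType) (p : nat) (S : A -> Prop) : A -> Prop :=
  fun y => exists2 x, S x & y = x *+ p.

Fixpoint pstage (A : zmodType) (p : nat) (k : nat) : A -> Prop :=
  match k with
  | 0 => fun _ => True
  | k'.+1 => @nmulset A p (pstage A p k')
  end.

Definition p_divisible (A : zmodType) (p : nat) (S : A -> Prop) : Prop :=
  @seteqP A (@nmulset A p S) S.

(* l_p(A) = 0  <->  p^0 A = A is p-divisible. *)
Definition plength_zero (A : zmodType) (p : nat) : Prop :=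
  @p_divisible A p (pstage A p 0).

(* l_p(A) < omega  <->  some finite stage p^n A is p-divisible
   (the least ordinal lambda with p^lambda A p-divisible is finite). *)
Definition plength_finite (A : zmodType) (p : nat) : Prop :=
  exists n : nat, @p_divisible A p (pstage A p n).

Definition almost_divisible (A : zmodType) : Prop :=
  (exists s : seq nat, forall p, prime p -> p \notin s -> plength_zero A p) /\
  (forall p, prime p -> plength_finite A p).

(* q_{<n} = prod_{l<n} q_l  (so q_{<0} = 1). *)
Definition qprod (q : nat -> int) (n : nat) : int := \prod_(l < n) q l.

(* Main.v *)
Require Import Defs.
From mathcomp Require Import all_boot all_order all_algebra.
From mathcomp Require Import ring.
From mathcomp Require Import zify.
From Stdlib Require Import Classical ClassicalEpsilon.
Import GRing.Theory Num.Theory.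

Section S.
Variable A : zmodType.
Local Open Scope ring_scope.

Definition ms (d : nat) (x : A) : Prop := exists y : A, x = y *+ d.

Lemma ms_abs (z : int) x : @zmulset A z (fun _ => True) x <-> ms `|z|%N x.
Proof.
case: (lerP 0 z) => hz.
  rewrite -{1}(gez0_abs hz); split; [by case=> y _ ->; exists y; rewrite pmulrn|].
  by case=> y ->; exists y; rewrite ?pmulrn.
rewrite -{1}(opprK z) -(ltz0_abs hz); split.
  by case=> y _ ->; exists (- y); rewrite mulrNz -mulNrz pmulrn.
by case=> y ->; exists (- y) => //; rewrite mulrNz mulNrz opprK pmulrn.
Qed.

Lemma ms_stage p k x : pstage A p k x <-> ms (p ^ k) x.
Proof.
elim: k x => [|k IH] x /=.
  by split=> // _; exists x; rewrite expn0 mulr1n.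
split.
  case=> y /IH [z ->] ->; exists z; by rewrite -mulrnA expnSr.
case=> z ->; exists (z *+ p ^ k); first by apply/IH; exists z.
by rewrite -mulrnA expnSr.
Qed.

Lemma ms_dvd a b x : (a %| b)%N -> ms b x -> ms a x.
Proof. by case/dvdnP=> c -> [y ->]; exists (y *+ c); rewrite -mulrnA. Qed.

Lemma ms_mul a b x : ms a x -> ms (a * b) (x *+ b).
Proof. by case=> y ->; exists y; rewrite -mulrnA. Qed.

Lemma ms_add d x y : ms d x -> ms d y -> ms d (x + y).
Proof. by case=> u -> [v ->]; exists (u + v); rewrite mulrnDl. Qed.

Lemma ms_zmul d x (k : int) : ms d x -> ms d (x *~ k).
Proof. by case=> u ->; exists (u *~ k); rewrite !pmulrn mulrzAC. Qed.

Lemma ms_cop a b x : coprime a b -> ms a x -> ms b x -> ms (a * b) x.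
Proof.
move=> cab [y hy] [z hz].
have [u [v huv]] := Bezoutz a b.
have g1 : gcdz a b = 1 by rewrite /gcdz /= (eqP cab).
rewrite g1 in huv.
have -> : x = x *~ (u * a) + x *~ (v * b) by rewrite -mulrzDr huv mulr1z.
apply: ms_add.
  rewrite {1}hz pmulrn -mulrzA.
  have -> : (b%:Z * (u * a%:Z)) = (a * b)%N%:Z * u by rewrite PoszM; ring.
  by rewrite mulrzA -pmulrn; apply: ms_zmul; exists z.
rewrite {1}hy pmulrn -mulrzA.
have -> : (a%:Z * (v * b%:Z)) = (a * b)%N%:Z * v by rewrite PoszM; ring.
by rewrite mulrzA -pmulrn; apply: ms_zmul; exists y.
Qed.

Definition stable p k := forall x, ms (p ^ k) x -> ms (p ^ k.+1) x.

Lemma stable_up p k j : stable p k -> (k <= j)%N -> stable p j.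
Proof.
move=> st /subnKC <-; set i := (j - k)%N.
move=> x [y ->].
have [z hz] : ms (p ^ k.+1) (y *+ p ^ k) by apply: st; exists y.
exists z; rewrite expnD mulrnA hz -mulrnA -expnD.
by rewrite addSn.
Qed.

Lemma div_prime M p x : (0 < M)%N -> prime p -> stable p (logn p M) ->
  ms M x -> ms (M * p) x.
Proof.
move=> M0 pp st hx.
have [M' cM' eM] := pfactor_coprime pp M0.
set k := logn p M in st eM.
have h1 : ms M' x by apply: ms_dvd hx; rewrite eM dvdn_mulr.
have h2 : ms (p ^ k.+1) x by apply: st; apply: ms_dvd hx; rewrite eM dvdn_mull.
have := ms_cop _ _ _ _ h1 h2.
rewrite eM expnSr mulnA; apply.
by rewrite -expnSr coprimeXr // coprime_sym.
Qed.

Lemma div_all M d x : (0 < M)%N -> (forall p, prime p -> stable p (logn p M)) ->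
  (0 < d)%N -> ms M x -> ms (M * d) x.
Proof.
move=> M0 st; elim/ltn_ind: d x => d IH x d0 hx.
have [d1|d1] := leqP d 1.
  have -> : d = 1%N by apply/eqP; rewrite eqn_leq d1 d0.
  by rewrite muln1.
have pp : prime (pdiv d) by apply: pdiv_prime.
have [d' ed] : exists d', d = (pdiv d * d')%N.
  by exists (d %/ pdiv d)%N; rewrite mulnC divnK // pdiv_dvd.
have d'0 : (0 < d')%N by move: d0; rewrite ed muln_gt0 => /andP[].
have d'lt : (d' < d)%N.
  rewrite ed -{1}(mul1n d') ltn_pmul2r //; exact: prime_gt1.
have [y hy] := IH d' d'lt x d'0 hx.
have [z hz] := div_prime _ _ (y *+ M) M0 pp (st _ pp) (ex_intro _ y (erefl _)).
exists z; rewrite hy mulrnA hz -!mulrnA. 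
by rewrite -mulnA -ed.
Qed.

Lemma ms_gcd M d x : (0 < M)%N -> (forall p, prime p -> stable p (logn p M)) ->
  (0 < d)%N -> ms d x <-> ms (gcdn d M) x.
Proof.
move=> M0 st d0; split; first by apply: ms_dvd; apply: dvdn_gcdl.
case=> y ->.
have [u [v huv]] := Bezoutz d M.
have -> : gcdn d M = `|gcdz d M|%N by [].
rewrite pmulrn gez0_abs; last by rewrite /gcdz.
rewrite -huv mulrzDr !mulrzA; apply: ms_add.
  by rewrite mulrzAC -pmulrn; apply: ms_zmul; exists y.
rewrite mulrzAC; apply: ms_zmul; rewrite -pmulrn.
have := div_all M d (y *+ M) M0 st d0 (ex_intro _ y (erefl _)).
by apply: ms_dvd; apply: dvdn_mull.
Qed.

Lemma stab_nat (f : nat -> nat) B :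
  (forall n n', (n <= n')%N -> (f n <= f n')%N) -> (forall n, (f n <= B)%N) ->
  exists m, forall n, (m <= n)%N -> f n = f m.
Proof.
move=> mono bd.
suff H : forall k (f : nat -> nat), (forall n n', (n <= n')%N -> (f n <= f n')%N) ->
  (forall n, (f n <= B)%N) -> (B - f 0 <= k)%N ->
  exists m, forall n, (m <= n)%N -> f n = f m by exact: (H _ f mono bd (leqnn _)).
elim=> [|k IH] {}f {}mono {}bd hk.
  exists 0%N => n _; have := mono 0%N n (leq0n _); have := bd n; lia.
case: (classic (forall n, f n = f 0%N)) => hc.
  by exists 0%N => n _; apply: hc.
have [n hn] : exists n, f n <> f 0%N.
  by apply: NNPP => hn; apply: hc => n; apply: NNPP => h; apply: hn; exists n.
have := mono 0%N n (leq0n _) => h0.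
have [m hm] := IH (fun i => f (n + i)%N) (fun a b hab => mono (n + a)%N (n + b)%N ltac:(rewrite leq_add2l; exact hab))
  (fun i => bd _) ltac:(have := bd n; rewrite addn0; lia).
exists (n + m)%N => n2 hn2.
have := hm (n2 - n)%N ltac:(lia); rewrite subnKC //; lia.
Qed.

Lemma ms_cancel a b x : coprime a b -> ms b (x *+ a) -> ms b x.
Proof.
move=> cab hb.
have [u [v huv]] := Bezoutz a b.
have g1 : gcdz a b = 1 by rewrite /gcdz /= (eqP cab).
rewrite g1 in huv.
have -> : x = x *~ (u * a) + x *~ (v * b) by rewrite -mulrzDr huv mulr1z.
apply: ms_add.
  by rewrite mulrC mulrzA -pmulrn; apply: ms_zmul.
by rewrite mulrC mulrzA -pmulrn; apply: ms_zmul; exists x.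
Qed.

Lemma stable_finite p : plength_finite A p <-> exists n, stable p n.
Proof.
split.
  case=> n hn; exists n => x /(ms_stage p n x) hx.
  by apply/(ms_stage p n.+1 x)/(hn x).
case=> n st; exists n => x; split.
  by move/(ms_stage p n.+1 x) => h; apply/(ms_stage p n x); apply: ms_dvd h; rewrite expnS dvdn_mull.
by move/(ms_stage p n x) => /st h; apply/(ms_stage p n.+1 x).
Qed.

Lemma stable_zero p : plength_zero A p <-> stable p 0.
Proof.
split.
  move=> h x _; have [y _ ->] := (proj2 (h x) I); exists y; by rewrite expn1.
move=> st x; split => // _.
have [y hy] := st x (ex_intro _ x (esym (mulr1n x))).
by exists y; rewrite // hy expn1.
Qed.

Lemma qprod_nat (r : nat -> nat) n :
  qprod (fun l => (r l)%:Z) n = (\prod_(l < n) r l)%N%:Z.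
Proof.
elim: n => [|n IH]; first by rewrite /qprod !big_ord0.
by rewrite /qprod !big_ord_recr /= PoszM -IH.
Qed.

Lemma qprod_dvd (q : nat -> int) n k : (`|qprod q n| %| `|qprod q (n + k)|)%N.
Proof.
elim: k => [|k IH]; first by rewrite addn0.
rewrite addnS /qprod big_ord_recr /= -/(qprod _ (n + k)) abszM.
exact: dvdn_mulr.
Qed.

Lemma forward : almost_divisible A ->
  (forall q : nat -> int, exists m : nat, forall n : nat, (m < n)%N ->
     @seteqP A (@zmulset A (qprod q n) (fun _ => True))
            (@zmulset A (qprod q m) (fun _ => True))).
Proof.
case=> [[s hs] hf] q.
have [N hN] : exists N, forall p, p \in s -> prime p -> stable p N.
  elim: s {hs} => [|a s [N hN]]; first by exists 0%N.
  case: (boolP (prime a)) => pa.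
    have [Na ha] := proj1 (stable_finite a) (hf a pa).
    exists (maxn N Na) => p; rewrite inE => /orP [/eqP -> _| ps pp].
      apply: stable_up ha _; exact: leq_maxr.
    apply: stable_up (hN p ps pp) _; exact: leq_maxl.
  exists N => p; rewrite inE => /orP [/eqP -> pp| ps pp]; [by rewrite pp in pa | exact: hN].
set M := (\prod_(p <- s | prime p) p ^ N)%N.
have M0 : (0 < M)%N by apply: prodn_cond_gt0 => p pp; rewrite expn_gt0 prime_gt0.
have stM : forall p, prime p -> stable p (logn p M).
  move=> p pp; case: (boolP (p \in s)) => ps.
    apply: stable_up (hN p ps pp) _.
    rewrite -pfactor_dvdn // /M (big_rem p ps) pp; exact: dvdn_mulr.
  apply: stable_up (leq0n _); apply/stable_zero; exact: hs.
case: (classic (exists j, q j = 0)) => [[j hj]|hq].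
  have z : forall n, (j < n)%N -> qprod q n = 0.
    move=> n jn; apply/eqP/prodf_eq0; exists (Ordinal jn) => //; by rewrite hj.
  exists j.+1 => n hn; rewrite (z n) ?(z j.+1) //; last exact: ltn_trans (ltnSn j) hn.
have qn0 : forall n, qprod q n != 0.
  move=> n; apply/prodf_eq0 => -[i _ /eqP hi]; apply: hq; by exists i.
have D0 : forall k, (0 < `|qprod q k|)%N by move=> k; rewrite absz_gt0.
set g := fun n => gcdn `|qprod q n| M.
have [m hm] : exists m, forall n, (m <= n)%N -> g n = g m.
  apply: (stab_nat g M).
    move=> n n' le; rewrite -(subnKC le); apply: dvdn_leq.
      by rewrite gcdn_gt0 M0 orbT.
    rewrite dvdn_gcd dvdn_gcdr andbT; apply: dvdn_trans (dvdn_gcdl _ _) (qprod_dvd _ _ _).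
  move=> n; exact: dvdn_leq M0 (dvdn_gcdr _ _).
exists m => n hn x.
have e1 := ms_abs (qprod q n) x.
have e2 := ms_abs (qprod q m) x.
have e3 := ms_gcd M _ x M0 stM (D0 n).
have e4 := ms_gcd M _ x M0 stM (D0 m).
have e5 : g n = g m by apply: hm; exact: ltnW.
rewrite /g /= in e5; rewrite e5 in e3.
tauto.
Qed.

Lemma backward :
  (forall q : nat -> int, exists m : nat, forall n : nat, (m < n)%N ->
     @seteqP A (@zmulset A (qprod q n) (fun _ => True))
            (@zmulset A (qprod q m) (fun _ => True))) -> almost_divisible A.
Proof.
move=> H; split; last first.
  move=> p pp; apply/stable_finite.
  have [m hm] := H (fun _ => p%:Z).
  exists m => x hx.
  have q1 : forall k, qprod (fun _ => p%:Z) k = (p ^ k)%N%:Z.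
    by move=> k; have := qprod_nat (fun _ => p) k; rewrite prod_nat_const card_ord.
  have e := hm m.+1 (ltnSn m) x.
  rewrite !q1 in e.
  apply: (proj1 (ms_abs (p ^ m.+1)%N%:Z x)); apply: (proj2 e); exact: (proj2 (ms_abs (p ^ m)%N%:Z x)).
apply: NNPP => hs.
have hg : forall k, exists p, prime p /\ (k < p)%N /\ ~ plength_zero A p.
  move=> k; apply: NNPP => hk; apply: hs; exists (iota 0 k.+1) => p pp ps.
  apply: NNPP => hz; apply: hk; exists p; split=> //; split=> //.
  rewrite mem_iota /= add0n in ps; lia.
pose g k := proj1_sig (constructive_indefinite_description _ (hg k)).
have gP : forall k, prime (g k) /\ (k < g k)%N /\ ~ plength_zero A (g k).
  move=> k; exact: (proj2_sig (constructive_indefinite_description _ (hg k))).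
pose r := fix r n := if n is n'.+1 then g (r n') else g 0%N.
have rP : forall n, prime (r n) /\ ~ plength_zero A (r n).
  move=> [|n]; [have [a [_ b]] := gP 0%N | have [a [_ b]] := gP (r n)]; by split.
have step : forall n, (r n < r n.+1)%N by move=> n; exact: (gP (r n)).2.1.
have rinc : forall l n, (l < n)%N -> (r l < r n)%N.
  move=> l n; elim: n => [//|n IH] hl; rewrite ltnS leq_eqVlt in hl.
  case/orP: hl => [/eqP->|hl]; [exact: step | exact: ltn_trans (IH hl) (step n)].
have cop : forall n, coprime (r n) (\prod_(l < n) r l).
  move=> n; apply: (big_ind (fun x => coprime (r n) x)).
  - exact: coprimen1.
  - by move=> a b ha hb; rewrite coprimeMr ha hb.
  - move=> i _; rewrite prime_coprime ?(rP n).1 //.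
    apply/negP => /(dvdn_leq (prime_gt0 (rP i).1)).
    by rewrite leqNgt (rinc i n (ltn_ord i)).
have [m hm] := H (fun l => (r l)%:Z).
apply: (rP m).2; apply/stable_zero => x _; rewrite expn1.
set D := (\prod_(l < m) r l)%N.
apply: (ms_cancel D); first by rewrite coprime_sym cop.
have e := hm m.+1 (ltnSn m) (x *+ D).
rewrite !qprod_nat in e.
have h1 : ms (\prod_(l < m.+1) r l)%N (x *+ D).
  apply: (proj1 (ms_abs (\prod_(l < m.+1) r l)%N%:Z _)); apply: (proj2 e); apply: (proj2 (ms_abs D%:Z _)); by exists x.
apply: ms_dvd h1; rewrite big_ord_recr /=; exact: dvdn_mull.
Qed.
End S.

Theorem mainTheorem2 (A : zmodType) :
  almost_divisible A <->
  (forall q : nat -> int, exists m : nat, forall n : nat, (m < n)%N ->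
     @seteqP A (@zmulset A (qprod q n) (fun _ => True))
            (@zmulset A (qprod q m) (fun _ => True))).
Proof. split; [exact: forward | exact: backward]. Qed.
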